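(* Let $\mathcal A\subset\mathbb R^n$ be compact with diameter $D_{\mathcal A}<\infty$, let $\mathcal X=\mathrm{conv}(\mathcal A)$, let $f$ have $L$-Lipschitz gradient, and let $\eta>1$. Run the AC-FW algorithm with the closed-loop Frank-Wolfe subroutine and a damping sequence satisfying Condition (D), with $L_0>0$. Then the subroutine satisfies parts (i) and (ii) of Condition (S); more precisely, for every $t\ge0$, $$|\mathcal G\cap\mathcal I_\eta\cap[t]|\ge t+1-\left\lfloor\log_\eta\!\left(\frac{L}{rL_0}\right)\right\rfloor.$$ If additionally $f$ is convex, then part (iii) of Condition (S) holds with $R=1$.
   Context: $D_{\mathcal A}:=\sup_{x,y\in\mathcal A}\|x-y\|_2$; $f:\mathbb R^n\to\mathbb R$ is differentiable with $\|\nabla f(x)-\nabla f(y)\|_2\le L\|x-y\|_2$. $x^\star$ is an optimal solution of $\min_{x\in\mathcal X}f(x)$. For $x\ne y$, $\ell(x,y):=2|f(y)-f(x)-\nabla f(x)^\top(y-x)|/\|y-x\|_2^2$, $\ell(x,x):=0$. AC-FW algorithm: given $\{r_t\}_{t\ge0}$ and a subroutine, pick $x_{-1}\in\mathcal A$, $x_0\in\arg\min_{v\in\mathcal A}\nabla f(x_{-1})^\top v$, $L_0:=\ell(x_{-1},x_0)$. For $t=0,1,\dots$: $v_t\in\arg\min_{v\in\mathcal A}\nabla f(x_t)^\top v$; the subroutine returns $(d_t,\gamma_t^{\max})$; $\gamma_t:=\min\{\nabla f(x_t)^\top d_t/(L_t\|d_t\|_2^2),\gamma_t^{\max}\}$;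 $\bar x_{t+1}:=x_t-\gamma_td_t$; $L_{t+1}:=\max\{\ell(x_t,\bar x_{t+1}),r_tL_t\}$; $x_{t+1}:=\bar x_{t+1}$ if $f(\bar x_{t+1})<f(x_t)$, else $x_{t+1}:=x_t$. Closed-loop Frank-Wolfe subroutine: $d_t:=x_t-v_t$, $\gamma_t^{\max}:=1$. $[t]:=\{0,\dots,t\}$; $\mathcal I_\eta:=\{t\ge0:L_{t+1}\le\eta L_t\}$; $\mathcal G:=\{t\ge0:\gamma_t^{\max}\ge1\text{ or }\gamma_t<\gamma_t^{\max}\}$. Condition (D): $r_t\in(0,1]$ for all $t$ and $r:=\prod_{t\ge0}r_t\in(0,1]$. Condition (S): for all $t\ge0$: (i) $\|d_t\|_2\le D_{\mathcal A}$ and $x_t-\gamma d_t\in\mathcal X$ for all $\gamma\in[0,\gamma_t^{\max}]$; (ii) $\mathcal G$ is infinite; (iii) if $f$ is convex, there is $R\ge1$ independent of $t$ with $\nabla f(x_t)^\top d_t\ge(f(x_t)-f(x^\star))/R$. *)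

(* Defs.v *)
From HB Require Import structures.
From mathcomp Require Import all_boot all_order all_algebra.
From mathcomp Require Import all_classical all_reals all_analysis.
Set Implicit Arguments. Unset Strict Implicit. Unset Printing Implicit Defensive.
Import Order.TTheory GRing.Theory Num.Theory.
Import numFieldNormedType.Exports.
Local Open Scope classical_set_scope.
Local Open Scope ring_scope.

Definition dotv {R : realType} {n : nat} (x y : 'rV[R]_n) : R :=
  \sum_(i < n) x 0 i * y 0 i.
Definition norm2 {R : realType} {n : nat} (x : 'rV[R]_n) : R :=
  Num.sqrt (dotv x x).

Definition grad {R : realType} {n : nat} (f : 'rV[R]_n -> R) (x : 'rV[R]_n)
  : 'rV[R]_n := \row_(i < n) ('d f x (delta_mx 0 i : 'rV[R]_n)).

Definition ellf {R : realType} {n : nat} (f : 'rV[R]_n -> R) (x y : 'rV[R]_n) : R :=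
  if x == y then 0
  else 2 * `|f y - f x - dotv (grad f x) (y - x)| / (norm2 (y - x)) ^+ 2.

Definition diam {R : realType} {n : nat} (A : set 'rV[R]_n) : R :=
  sup [set dd | exists x y, A x /\ A y /\ dd = norm2 (x - y)].

Definition conv_hull {R : realType} {n : nat} (A : set 'rV[R]_n) : set 'rV[R]_n :=
  [set z | exists (k : nat) (w : 'I_k -> R) (p : 'I_k -> 'rV[R]_n),
      (forall i, 0 <= w i) /\ \sum_(i < k) w i = 1 /\ (forall i, A (p i)) /\
      z = \sum_(i < k) w i *: p i].

Definition argmin_in {R : realType} {n : nat} (A : set 'rV[R]_n) (g v : 'rV[R]_n) : Prop :=
  A v /\ forall u, A u -> dotv g v <= dotv g u.

Definition convex_fun {R : realType} {n : nat} (f : 'rV[R]_n -> R) : Prop :=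
  forall (x y : 'rV[R]_n) (lam : R), 0 <= lam <= 1 ->
    f (lam *: x + (1 - lam) *: y) <= lam * f x + (1 - lam) * f y.

(* A run of AC-FW with the closed-loop Frank-Wolfe subroutine.
   xm1 = x_{-1}; x t = x_t; v t = v_t; d t = d_t; gmax t = gamma_t^max;
   gam t = gamma_t; xbar (t+1) = \bar x_{t+1} (xbar 0 is unused); Ls t = L_t;
   rs t = r_t. *)
Definition acfw_cfw_run {R : realType} {n : nat} (f : 'rV[R]_n -> R)
  (A : set 'rV[R]_n) (rs : nat -> R) (xm1 : 'rV[R]_n)
  (x v d : nat -> 'rV[R]_n) (gmax gam : nat -> R) (xbar : nat -> 'rV[R]_n)
  (Ls : nat -> R) : Prop :=
  A xm1 /\ argmin_in A (grad f xm1) (x 0%N) /\ Ls 0%N = ellf f xm1 (x 0%N) /\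
  forall t : nat,
    argmin_in A (grad f (x t)) (v t) /\
    d t = x t - v t /\ gmax t = 1 /\
    gam t = Num.min (dotv (grad f (x t)) (d t) / (Ls t * (norm2 (d t)) ^+ 2)) (gmax t) /\
    xbar t.+1 = x t - gam t *: d t /\
    Ls t.+1 = Num.max (ellf f (x t) (xbar t.+1)) (rs t * Ls t) /\
    x t.+1 = (if f (xbar t.+1) < f (x t) then xbar t.+1 else x t).

Definition in_G {R : realType} (gmax gam : nat -> R) (t : nat) : bool :=
  (1 <= gmax t) || (gam t < gmax t).
Definition in_I {R : realType} (eta : R) (Ls : nat -> R) (t : nat) : bool :=
  Ls t.+1 <= eta * Ls t.

(* Main.v *)
Require Import Defs.
From HB Require Import structures.
From mathcomp Require Import all_boot all_order all_algebra.
From mathcomp Require Import all_classical all_reals all_analysis.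
From mathcomp Require Import ring lra.
Import Order.TTheory GRing.Theory Num.Theory.
Import numFieldNormedType.Exports.
Local Open Scope classical_set_scope.
Local Open Scope ring_scope.


Section Basic.
Context {R : realType} {n : nat}.
Implicit Types (x y z : 'rV[R]_n).

Lemma dotvC x y : dotv x y = dotv y x.
Proof. by rewrite /dotv; apply: eq_bigr => i _; rewrite mulrC. Qed.

Lemma dotvDl x y z : dotv (x + y) z = dotv x z + dotv y z.
Proof. by rewrite /dotv -big_split; apply: eq_bigr => i _; rewrite mxE mulrDl. Qed.

Lemma dotvZl (a : R) x y : dotv (a *: x) y = a * dotv x y.
Proof. by rewrite /dotv mulr_sumr; apply: eq_bigr => i _; rewrite mxE mulrA. Qed.

Lemma dotvNl x y : dotv (- x) y = - dotv x y.
Proof. by rewrite -scaleN1r dotvZl mulN1r. Qed.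

Lemma dotvBl x y z : dotv (x - y) z = dotv x z - dotv y z.
Proof. by rewrite dotvDl dotvNl. Qed.

Lemma dotvDr x y z : dotv x (y + z) = dotv x y + dotv x z.
Proof. by rewrite dotvC dotvDl !(dotvC x). Qed.
Lemma dotvZr (a : R) x y : dotv x (a *: y) = a * dotv x y.
Proof. by rewrite dotvC dotvZl dotvC. Qed.
Lemma dotvBr x y z : dotv x (y - z) = dotv x y - dotv x z.
Proof. by rewrite dotvC dotvBl !(dotvC x). Qed.

Lemma dotv_ge0 x : 0 <= dotv x x.
Proof. by rewrite /dotv; apply: sumr_ge0 => i _; rewrite -expr2 sqr_ge0. Qed.

Lemma norm2_ge0 x : 0 <= norm2 x.
Proof. exact: sqrtr_ge0. Qed.

Lemma norm2_sq x : norm2 x ^+ 2 = dotv x x.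
Proof. by rewrite /norm2 sqr_sqrtr // dotv_ge0. Qed.

Lemma norm2Z (a : R) x : norm2 (a *: x) = `|a| * norm2 x.
Proof. by rewrite /norm2 dotvZl dotvZr mulrA -expr2 sqrtrM ?sqr_ge0 // sqrtr_sqr. Qed.

Lemma CS_sq x y : dotv x y ^+ 2 <= dotv x x * dotv y y.
Proof.
set A := dotv x x; set B := dotv y y; set C := dotv x y.
have hA : 0 <= A := dotv_ge0 x. have hB : 0 <= B := dotv_ge0 y.
have h1 := dotv_ge0 (B *: x - C *: y).
have h2 := dotv_ge0 (A *: y - C *: x).
have h3 := dotv_ge0 (x + y).
have h4 := dotv_ge0 (x - y).
move: h1 h2 h3 h4.
rewrite !(dotvBl, dotvBr, dotvDl, dotvDr, dotvZl, dotvZr) -/A -/B -/C (dotvC y x) -/C.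
move=> h1 h2 h3 h4.
have e1 : 0 <= B * (A * B - C ^+ 2) by rewrite expr2; lra.
have e2 : 0 <= A * (A * B - C ^+ 2) by rewrite expr2; lra.
rewrite -subr_ge0.
have [Bp|] := ltrP 0 B; first by rewrite -(pmulr_rge0 _ Bp).
move=> B0; have {}B0 : B = 0 by apply/le_anti; rewrite B0 hB.
have [Ap|] := ltrP 0 A; first by rewrite -(pmulr_rge0 _ Ap).
move=> A0; have {}A0 : A = 0 by apply/le_anti; rewrite A0 hA.
have C0 : C = 0 by rewrite A0 B0 in h3 h4; lra.
by rewrite A0 B0 C0; lra.
Qed.

Lemma CS x y : `|dotv x y| <= norm2 x * norm2 y.
Proof.
rewrite /norm2 -sqrtrM ?dotv_ge0 // -sqrtr_sqr ler_sqrt ?mulr_ge0 ?dotv_ge0 //.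
exact: CS_sq.
Qed.

End Basic.

Section Deriv.
Context {R : realType} {n : nat}.
Implicit Types (x y z h : 'rV[R]_n) (f : 'rV[R]_n -> R).

Lemma diff_dot f z h : 'd f z h = dotv (grad f z) h.
Proof.
rewrite {1}(row_sum_delta h) linear_sum /dotv; apply: eq_bigr => i _.
by rewrite linearZ /= mxE mulrC.
Qed.

Lemma derive_line f z h s : differentiable f (z + s *: h) ->
  is_derive s 1 (fun t => f (z + t *: h)) ('d f (z + s *: h) h).
Proof.
move=> df.
have E : (fun e : R => e^-1 *: (((fun t => f (z + t *: h)) \o shift s) (e *: 1)
             - f (z + s *: h)))
       = (fun e : R => e^-1 *: ((f \o shift (z + s *: h)) (e *: h) - f (z + s *: h))).
  apply/funext => e /=; congr (_ *: (f _ - _)).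
  by rewrite /shift /= scaler1 scalerDl addrCA addrA.
split; first by rewrite /derivable E; exact: diff_derivable.
by rewrite /derive E -/(derive f _ h) deriveE.
Qed.

End Deriv.

Section Descent.
Context {R : realType} {n : nat}.
Implicit Types (x y z h : 'rV[R]_n) (f : 'rV[R]_n -> R).

Lemma aux_ineq (k a b e L s : R) : `|k| = 1 -> `|a| <= b * e ->
  b <= L * (s * e) -> 0 <= e -> k * a - L / 2 * e ^+ 2 * (s + s) <= 0.
Proof.
move=> k1 h1 h2 e0.
have h0 : k * a <= `|a| by rewrite -[X in _ <= X]mul1r -k1 -normrM ler_norm.
have h4 : b * e <= L * (s * e) * e by apply: ler_wpM2r.
have -> : L / 2 * e ^+ 2 * (s + s) = L * (s * e) * e by rewrite expr2; field.
rewrite subr_le0; apply: (le_trans h0); apply: (le_trans h1); exact: h4.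
Qed.

Lemma descent_k f L x y (k : R) : (forall y, differentiable f y) ->
  (forall y z, norm2 (grad f y - grad f z) <= L * norm2 (y - z)) ->
  `|k| = 1 ->
  k * (f y - f x - dotv (grad f x) (y - x)) <= L / 2 * dotv (y - x) (y - x).
Proof.
move=> df Lip k1.
set h := y - x; set c := dotv (grad f x) h; set N := dotv h h.
pose M := L / 2 * N.
pose phi : R -> R := k \*: ((fun t => f (x + t *: h)) - c \*: id) - M \*: (id * id : R -> R).
have dphi (s : R) : is_derive s 1 phi (k * ('d f (x + s *: h) h - c) - M * (s + s)).
  apply: is_derive_eq.
    exact: (is_deriveB (is_deriveZ k (is_deriveB (derive_line _ _ _ _ (df _))
       (is_deriveZ c (@is_derive_id _ _ s 1))))
       (is_deriveZ M (is_deriveM (@is_derive_id _ _ s 1) (@is_derive_id _ _ s 1)))).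
  by rewrite /= -[c%:A]/(c * 1) -[(id s)%:A]/(s * 1) !mulr1.
have ddphi (s : R) : derivable phi s 1 by case: (dphi s).
have vphi (s : R) : 'D_1 phi s = k * ('d f (x + s *: h) h - c) - M * (s + s) by case: (dphi s).
have cphi : {within `[0, 1], continuous phi}.
  apply: continuous_subspaceT => s.
  apply: differentiable_continuous; apply/derivable1_diffP.
  exact: ddphi.
have le10 : phi 1 <= phi 0.
  apply: (@ler0_derive1_le_cc _ phi 0 1) => //.
  - move=> s; rewrite in_itv /= => /andP[s0 s1].
    rewrite derive1E vphi.
    rewrite diff_dot /c -dotvBl /M.
    rewrite -[N]/(dotv h h) -norm2_sq.
    have h3 := Lip (x + s *: h) x.
    have e : x + s *: h - x = s *: h by rewrite addrAC subrr add0r.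
    rewrite e norm2Z (ger0_norm (ltW s0)) in h3.
    exact: (aux_ineq _ _ _ _ _ _ k1 (CS _ _) h3 (norm2_ge0 _)).
  - by rewrite in_itv /= lexx ler01.
  - by rewrite in_itv /= lexx ler01.

have phiv (t : R) : phi t = k * (f (x + t *: h) - c * t) - M * (t * t) by [].
have xh : x + h = y by rewrite /h addrC subrK.
move: le10; rewrite !phiv scale1r scale0r addr0 xh.
rewrite ?mulr0 ?mulr1 ?mul0r ?subr0 ?mulr0 ?subr0 => le10.
rewrite -/M; move: le10; clearbody M c; move: (f y) (f x) => a b.
clear; lra.
Qed.

End Descent.

Section Ell.
Context {R : realType} {n : nat}.
Implicit Types (x y z h : 'rV[R]_n) (f : 'rV[R]_n -> R).

Lemma descent f L x y : (forall y, differentiable f y) ->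
  (forall y z, norm2 (grad f y - grad f z) <= L * norm2 (y - z)) ->
  `|f y - f x - dotv (grad f x) (y - x)| <= L / 2 * dotv (y - x) (y - x).
Proof.
move=> df Lip.
have h1 := descent_k f L x y 1 df Lip (normr1 R).
have k1 : `|- 1 : R| = 1 by rewrite normrN normr1.
have h2 := descent_k f L x y (- 1) df Lip k1.
move: h1 h2; set u := f y - f x - _; set N := L / 2 * _.
move=> h1 h2; rewrite ler_norml; apply/andP; split; lra.
Qed.

Lemma ell_ge0 f x y : 0 <= ellf f x y.
Proof.
rewrite /ellf; case: eqP => _ //.
by apply: divr_ge0; [apply: mulr_ge0 | apply: exprn_ge0; exact: norm2_ge0].
Qed.

Lemma ell_le f L x y : (forall y, differentiable f y) ->
  (forall y z, norm2 (grad f y - grad f z) <= L * norm2 (y - z)) ->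
  ellf f x y <= Num.max L 0.
Proof.
move=> df Lip; rewrite /ellf; case: eqP => _; first by rewrite le_max lexx orbT.
have D := descent f L x y df Lip.
rewrite norm2_sq; move: D; set u := f y - f x - _; set N := dotv (y - x) (y - x).
have N0 : 0 <= N by exact: dotv_ge0.
move=> D.
have [Np|] := ltrP 0 N; last first.
  move=> N0'; have -> : N = 0 by apply/le_anti; rewrite N0' N0.
  by rewrite invr0 mulr0 le_max lexx orbT.
rewrite ler_pdivrMr //.
have LN : L / 2 * N <= Num.max L 0 / 2 * N.
  by apply: ler_wpM2r => //; apply: ler_wpM2r; [rewrite invr_ge0 ler0n | rewrite le_max lexx].
move: D LN; move: (Num.max L 0) `|u| => m a D LN.
lra.
Qed.

End Ell.

Section Diam.
Context {R : realType} {n : nat}.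
Implicit Types (x y z h p q : 'rV[R]_n) (A : set 'rV[R]_n).

Lemma coord_le p i : `|p 0 i| <= `|p|.
Proof.
rewrite [X in _ <= X]/Num.norm /= mx_normrE (bigD1 (0, i)) //= le_max lexx //.
Qed.

Lemma diam_ub A p q : compact A -> A p -> A q -> norm2 (p - q) <= diam A.
Proof.
move=> /compact_bounded cA Ap Aq.
have [M HM] : exists M, forall x, A x -> `|x| <= M.
  case: cA => M0 [_ H]; exists (M0 + 1); apply: H; by rewrite ltrDl.
rewrite /diam; apply: ub_le_sup; last by exists p, q.
exists (Num.sqrt (((M + M) * (M + M)) *+ n)) => _ [a [b [Aa [Ab ->]]]].
rewrite /norm2 ler_sqrt; last by rewrite mulrn_wge0 // -expr2 sqr_ge0.
have -> : ((M + M) * (M + M)) *+ n = \sum_(i < n) ((M + M) * (M + M)) by rewrite sumr_const card_ord.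
rewrite /dotv.
apply: ler_sum => i _.
have B : `|(a - b) 0 i| <= M + M.
  apply: (le_trans (coord_le _ _)); apply: (le_trans (ler_normB _ _)).
  by apply: lerD; apply: HM.
apply: (le_trans (ler_norm _)); rewrite normrM.
by apply: ler_pM.
Qed.

End Diam.

Section Conv.
Context {R : realType} {n : nat}.
Implicit Types (x y z h p q u : 'rV[R]_n) (A : set 'rV[R]_n).

Lemma conv_pt A p : A p -> conv_hull A p.
Proof.
move=> Ap; exists 1%N, (fun _ => 1), (fun _ => p).
by rewrite !big_ord1 scale1r; split => //; split.
Qed.

Lemma conv_step A z u (g : R) : conv_hull A z -> A u -> 0 <= g <= 1 ->
  conv_hull A (z - g *: (z - u)).
Proof.
move=> [k [w [p [w0 [w1 [Ap ->]]]]]] Au /andP[g0 g1].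
pose w' := fun i : 'I_k.+1 => if (insub (val i) : option 'I_k) is Some j then (1 - g) * w j else g.
pose p' := fun i : 'I_k.+1 => if (insub (val i) : option 'I_k) is Some j then p j else u.
have ins (i : 'I_k) (H : (k <= k.+1)%N) : (insub (val (widen_ord H i)) : option 'I_k) = Some i.
  by rewrite /= valK.
have insm : (insub (val (@ord_max k)) : option 'I_k) = None by rewrite insubF //= ltnn.
have w'E (i : 'I_k) : w' (widen_ord (leqnSn k) i) = (1 - g) * w i by rewrite /w' ins.
have p'E (i : 'I_k) : p' (widen_ord (leqnSn k) i) = p i by rewrite /p' ins.
have w'm : w' ord_max = g by rewrite /w' insm.
have p'm : p' ord_max = u by rewrite /p' insm.
exists k.+1, w', p'; split; [|split; [|split]].
- move=> i; rewrite /w'; case: insub => [j|] //; apply: mulr_ge0 => //; lra.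
- rewrite big_ord_recr /= w'm.
  under eq_bigr do rewrite w'E.
  by rewrite -mulr_sumr w1 mulr1 subrK.
- by move=> i; rewrite /p'; case: insub.
- rewrite big_ord_recr /= w'm p'm.
  under [in RHS]eq_bigr do rewrite w'E p'E.
  rewrite [in RHS](eq_bigr (fun i => (1 - g) *: (w i *: p i))); last by move=> i _; rewrite scalerA.
  rewrite -scaler_sumr scalerBr scalerBl scale1r.
  by rewrite opprB addrA addrAC.
Qed.

Lemma dotv_sumr I (r : seq I) (P : pred I) (F : I -> 'rV[R]_n) g :
  dotv g (\sum_(i <- r | P i) F i) = \sum_(i <- r | P i) dotv g (F i).
Proof.
rewrite /dotv; under eq_bigr do rewrite summxE mulr_sumr.
by rewrite exchange_big.
Qed.

Lemma conv_dot A z g c : conv_hull A z -> (forall p, A p -> c <= dotv g p) ->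
  c <= dotv g z.
Proof.
move=> [k [w [p [w0 [w1 [Ap ->]]]]]] H.
rewrite dotv_sumr -[c]mul1r -w1 mulr_suml; apply: ler_sum => i _.
by rewrite dotvZr; apply: ler_wpM2l => //; apply: H.
Qed.

End Conv.

Section Convex.
Context {R : realType} {n : nat}.
Implicit Types (x y z h p q u : 'rV[R]_n) (f : 'rV[R]_n -> R).

Lemma convex_fo f x y : convex_fun f -> differentiable f x ->
  f x + dotv (grad f x) (y - x) <= f y.
Proof.
move=> cf dfx.
rewrite -diff_dot -deriveE //.
have dv : derivable f x (y - x) by exact: diff_derivable.
set q := fun h : R => h^-1 *: ((f \o shift x) (h *: (y - x)) - f x).
have c1 : q @ 0^' --> 'D_(y - x) f x by exact: dv.
have sub : (0:R)^'+ `=>` (0:R)^'.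
  move=> P; rewrite /at_right /dnbhs /within /= => H.
  by apply: filterS H => z h zp; apply: h; rewrite gt_eqF.
have c2 : q @ 0^'+ --> 'D_(y - x) f x by apply: cvg_trans c1; exact: cvg_app.
have -> : 'D_(y - x) f x = lim (q @ 0^'+) by apply/esym/cvg_lim.
rewrite -lerBrDl.
apply: limr_le; first by apply/cvg_ex; exists ('D_(y - x) f x).
near=> e.
have e0 : 0 < e by near: e; exact: nbhs_right_gt.
have e1 : e <= 1 by near: e; apply: nbhs_right_le; exact: ltr01.
rewrite /q /= /shift.
have -> : e *: (y - x) + x = e *: y + (1 - e) *: x.
  by rewrite scalerBr scalerBl scale1r addrC addrA addrAC [e *: y + _]addrC.
have cv := cf y x e; rewrite e1 ltW //= in cv.
have cv' := cv isT.
rewrite -[_ *: _]/(_ * _) ler_pdivrMl //.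
lra.
Unshelve. all: by end_near.
Qed.

End Convex.

Section Count.
Context {R : realType}.

Lemma Ls_lower (eta : R) (Ls rs : nat -> R) :
  1 < eta -> (forall s, 0 < rs s <= 1) -> 0 < Ls 0%N ->
  (forall s, rs s * Ls s <= Ls s.+1) ->
  forall t, eta ^+ (count (predC (in_I eta Ls)) (iota 0 t)) * (\prod_(s < t) rs s) * Ls 0%N
            <= Ls t.
Proof.
move=> eta1 hrs L0 hstep.
have Lpos : forall s, 0 < Ls s.
  elim=> // s IH; apply: lt_le_trans (hstep s); apply: mulr_gt0 => //.
  by case/andP: (hrs s).
elim=> [|t IH]; first by rewrite /= expr0 big_ord0 !mul1r.
have -> : iota 0 t.+1 = iota 0 t ++ [:: t] by rewrite -addn1 iotaD.
rewrite big_ord_recr /= count_cat /= addn0.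
have [r0 r1] := andP (hrs t).
have Pge0 : 0 <= \prod_(s < t) rs s by apply: prodr_ge0 => i _; exact: ltW (proj1 (andP (hrs i))).
set a := eta ^+ _ in IH.
have a0 : 0 <= a by apply: exprn_ge0; lra.
rewrite /in_I; case hI : (Ls t.+1 <= eta * Ls t) => /=.
- rewrite ?addn0 -/a.
  apply: le_trans (hstep t).
  have -> : a * (\prod_(i < t) rs i * rs t) * Ls 0%N
          = rs t * (a * \prod_(i < t) rs i * Ls 0%N) by ring.
  by apply: ler_wpM2l => //; exact: ltW.
- rewrite addn1 exprS -/a.
  have hI' : eta * Ls t < Ls t.+1 by rewrite ltNge hI.
  apply: le_trans (ltW hI').
  have -> : eta * a * (\prod_(i < t) rs i * rs t) * Ls 0%N
          = eta * (rs t * (a * \prod_(i < t) rs i * Ls 0%N)) by ring.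
  apply: ler_wpM2l; first lra.
  apply: le_trans IH; apply: ler_piMl => //.
  apply: mulr_ge0 => //; [exact: mulr_ge0 | exact: ltW].
Qed.

Lemma count_bound (eta L r : R) (Ls rs : nat -> R) t :
  1 < eta -> (forall s, 0 < rs s <= 1) -> 0 < r ->
  (forall N, r <= \prod_(s < N) rs s) -> 0 < Ls 0%N ->
  (forall s, rs s * Ls s <= Ls s.+1) -> (forall s, Ls s <= L) ->
  ((t.+1)%:R : R) - (Num.floor (ln (L / (r * Ls 0%N)) / ln eta))%:~R
     <= (count (in_I eta Ls) (iota 0 t.+1))%:R.
Proof.
move=> eta1 hrs r0 rP L0 hstep hL.
set m := count (predC (in_I eta Ls)) (iota 0 t.+1).
have hc : (count (in_I eta Ls) (iota 0 t.+1) + m = t.+1)%N.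
  by rewrite count_predC size_iota.
have low := Ls_lower _ _ _ eta1 hrs L0 hstep t.+1.
have P := rP t.+1.
have e0 : 0 < eta by lra.
have em : 0 < eta ^+ m by exact: exprn_gt0.
have rL0 : 0 < r * Ls 0%N by exact: mulr_gt0.
have key : eta ^+ m * (r * Ls 0%N) <= L.
  apply: le_trans (hL t.+1); apply: le_trans low; rewrite mulrA.
  apply: ler_wpM2r; first exact: ltW.
  by apply: ler_wpM2l => //; exact: ltW.
have Lp : 0 < L by apply: lt_le_trans key; exact: mulr_gt0.
have lnk : ln eta *+ m + ln (r * Ls 0%N) <= ln L.
  rewrite -lnXn // -lnM ?posrE ?exprn_gt0 //.
  by rewrite ler_ln ?posrE // mulr_gt0.
have lne : 0 < ln eta by exact: ln_gt0.
have hm : (m%:R : R) <= ln (L / (r * Ls 0%N)) / ln eta.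
  rewrite ln_div ?posrE // ler_pdivlMr //.
  by rewrite -mulr_natl in lnk; rewrite lerBrDr.
have hf : (m%:Z <= Num.floor (ln (L / (r * Ls 0%N)) / ln eta))%R.
  by rewrite floor_ge_int.
have hf' : (m%:R : R) <= (Num.floor (ln (L / (r * Ls 0%N)) / ln eta))%:~R.
  by rewrite -[m%:R]/((m%:Z)%:~R : R) ler_int.
have -> : ((t.+1)%:R : R) = (count (in_I eta Ls) (iota 0 t.+1))%:R + m%:R by rewrite -natrD hc.
lra.
Qed.

End Count.

Section Cvx.
Context {R : realType} {n : nat}.
Implicit Types (a b : 'rV[R]_n).

Lemma norm2_cvx a b (g D : R) : 0 <= g <= 1 -> norm2 a <= D -> norm2 b <= D ->
  norm2 ((1 - g) *: a + g *: b) <= D.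
Proof.
move=> /andP[g0 g1] Ha Hb.
have D0 : 0 <= D := le_trans (norm2_ge0 a) Ha.
have sa : dotv a a <= D * D.
  by rewrite -norm2_sq expr2; apply: ler_pM => //; exact: norm2_ge0.
have sb : dotv b b <= D * D.
  by rewrite -norm2_sq expr2; apply: ler_pM => //; exact: norm2_ge0.
set c := (1 - g) *: a + g *: b.
have sc : dotv c c <= (1 - g) * dotv a a + g * dotv b b.
  rewrite /dotv !mulr_sumr -big_split; apply: ler_sum => i _; rewrite !mxE /=.
  rewrite -subr_ge0.
  have -> : (1 - g) * (a 0 i * a 0 i) + g * (b 0 i * b 0 i) -
      ((1 - g) * a 0 i + g * b 0 i) * ((1 - g) * a 0 i + g * b 0 i)
      = g * (1 - g) * ((a 0 i - b 0 i) * (a 0 i - b 0 i)) by ring.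
  apply: mulr_ge0; first by apply: mulr_ge0; lra.
  by rewrite -expr2 sqr_ge0.
rewrite /norm2 -[D in _ <= D]ger0_norm // -sqrtr_sqr ler_sqrt ?sqr_ge0 // expr2.
apply: le_trans sc _.
have h1 : (1 - g) * dotv a a <= (1 - g) * (D * D) by apply: ler_wpM2l => //; lra.
have h2 : g * dotv b b <= g * (D * D) by apply: ler_wpM2l.
move: h1 h2; move: (D * D) (dotv a a) (dotv b b) => x y z; lra.
Qed.

End Cvx.

Theorem lemma5 (R : realType) (n : nat) (A : set 'rV[R]_n) (f : 'rV[R]_n -> R)
  (L eta : R) (rs : nat -> R) (r : R)
  (xm1 : 'rV[R]_n) (x v d : nat -> 'rV[R]_n) (gmax gam : nat -> R)
  (xbar : nat -> 'rV[R]_n) (Ls : nat -> R) :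
  compact A ->
  (forall y, differentiable f y) ->
  (forall y z, norm2 (grad f y - grad f z) <= L * norm2 (y - z)) ->
  1 < eta ->
  (* Condition (D) *)
  (forall t, 0 < rs t <= 1) ->
  (fun N : nat => \prod_(t < N) rs t) @ \oo --> r ->
  0 < r <= 1 ->
  acfw_cfw_run f A rs xm1 x v d gmax gam xbar Ls ->
  0 < Ls 0%N ->
  (* Condition (S)(i) *)
  (forall t, norm2 (d t) <= diam A /\
     (forall g, 0 <= g <= gmax t -> conv_hull A (x t - g *: d t))) /\
  (* Condition (S)(ii) *)
  (forall N : nat, exists2 t : nat, (N <= t)%N & in_G gmax gam t) /\
  (* quantitative count *)
  (forall t : nat,
     ((t.+1)%:R : R) - (Num.floor (ln (L / (r * Ls 0%N)) / ln eta))%:~R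
       <= (count (fun s => in_G gmax gam s && in_I eta Ls s) (iota 0 t.+1))%:R) /\
  (* Condition (S)(iii) with R = 1 when f is convex *)
  (convex_fun f ->
     forall xstar, conv_hull A xstar -> (forall y, conv_hull A y -> f xstar <= f y) ->
     forall t, f (x t) - f xstar <= dotv (grad f (x t)) (d t)).
Proof.
move=> cA df Lip eta1 hrs hcvg /andP[r0 r1] [Axm1 [[Ax0 minx0] [HL0 step]]] L0.
have Lpos : forall s, 0 < Ls s.
  elim=> // s IH; have [_ [_ [_ [_ [_ [hL _]]]]]] := step s.
  rewrite hL lt_max; apply/orP; right; apply: mulr_gt0 => //.
  by case/andP: (hrs s).
have gam01 : forall t, conv_hull A (x t) -> 0 <= gam t <= 1.
  move=> t cx; have [[Av minv] [hd [hg [hgam _]]]] := step t.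
  rewrite hgam hg le_min ge_min lexx orbT ler01 andbT.
  rewrite andbT; apply: mulr_ge0; last first.
    by rewrite invr_ge0; apply: mulr_ge0; [exact: ltW | apply: exprn_ge0; exact: norm2_ge0].
  rewrite hd dotvBr subr_ge0; apply: (conv_dot _ _ _ _ cx) => p Ap; exact: minv.
have inv : forall t, conv_hull A (x t) /\ forall u, A u -> norm2 (x t - u) <= diam A.
  elim=> [|t [cx dx]].
    by split; [exact: conv_pt | move=> u Au; exact: diam_ub].
  have [[Av minv] [hd [hg [hgam [hxb [hL hx]]]]]] := step t.
  have g01 := gam01 t cx.
  rewrite hx; case: ifP => _ //.
  rewrite hxb hd; split; first exact: conv_step.
  move=> u Au.
  have -> : x t - gam t *: (x t - v t) - u = (1 - gam t) *: (x t - u) + gam t *: (v t - u).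
    by apply/rowP => i; rewrite !mxE; ring.
  by apply: norm2_cvx => //; [exact: dx | exact: diam_ub].
split.
  move=> t; have [cx dx] := inv t; have [[Av minv] [hd [hg _]]] := step t.
  split; first by rewrite hd; exact: dx.
  by move=> g; rewrite hg hd => g01; exact: conv_step.
split.
  by move=> N; exists N => //; have [_ [_ [hg _]]] := step N; rewrite /in_G hg lexx.
split.
  move=> t.
  have hG : forall s, in_G gmax gam s by move=> s; have [_ [_ [hg _]]] := step s; rewrite /in_G hg lexx.
  rewrite (eq_count (a2 := in_I eta Ls)); last by move=> s; rewrite hG.
  have hstep : forall s, rs s * Ls s <= Ls s.+1.
    by move=> s; have [_ [_ [_ [_ [_ [hL _]]]]]] := step s; rewrite hL le_max lexx orbT.
  have hLe : forall s, Ls s <= Num.max L 0.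
    elim=> [|s IH]; first by rewrite HL0; exact: ell_le.
    have [_ [_ [_ [_ [_ [hL _]]]]]] := step s.
    rewrite hL ge_max ell_le //=; apply: le_trans IH; apply: ler_piMl.
      exact: ltW.
    by case/andP: (hrs s).
  have Lp : 0 < L.
    have := lt_le_trans L0 (hLe 0%N); rewrite lt_max ltxx orbF //.
  have hLe' : forall s, Ls s <= L by move=> s; have := hLe s; rewrite max_l // ltW.
  have rP : forall N, r <= \prod_(s < N) rs s.
    move=> N.
    have nincr : nonincreasing_seq (fun N : nat => \prod_(t < N) rs t).
      apply/nonincreasing_seqP => k; rewrite big_ord_recr /=.
      apply: ler_piMr; first by apply: prodr_ge0 => i _; case/andP: (hrs i) => /ltW.
      by case/andP: (hrs k).
    have := nonincreasing_cvgn_ge nincr (cvgP _ hcvg) N.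
    by rewrite (cvg_lim _ hcvg).
  exact: count_bound.
move=> cf xstar cxs _ t.
have [cx _] := inv t; have [[Av minv] [hd _]] := step t.
have h1 := convex_fo f (x t) xstar cf (df (x t)).
have h2 : dotv (grad f (x t)) (v t) <= dotv (grad f (x t)) xstar.
  by apply: (conv_dot _ _ _ _ cxs) => p Ap; exact: minv.
move: h1 h2; rewrite hd dotvBr dotvBr.
move: (dotv _ xstar) (dotv _ (x t)) (dotv _ (v t)) (f xstar) (f (x t)) => a b c e g.
lra.
Qed.
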